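(* The function $$G:\lambda_{Lag}\mapsto\int_0^\infty e^{-\lambda s}\left(U\Big((U')^{-1}\big(\tfrac{1}{\lambda_{Lag}}e^{(\lambda-\delta)s}\big)\Big)-h\Big(\big(\tfrac{h'}{\varphi'}\big)^{-1}\big(\tfrac{1}{\lambda_{Lag}}e^{(\lambda-\delta)s}\big)\vee 0\Big)\right)ds$$ is increasing on $(0,\infty)$.
   Context: Standing assumptions: $\varphi:[0,\infty)\to[0,\infty)$ is $C^2$, strictly concave, bounded, increasing, $\varphi(0)=0$, $\varphi'(0)>0$; $U:[0,\infty)\to[0,\infty)$ is $C^2$, strictly concave, increasing, $U(0)=0$, $\lim_{x\to\infty}U'(x)=0$, $\lim_{x\to0}U'(x)=\infty$; $h:[0,\infty)\to[0,\infty)$ is $C^2$, strictly convex, increasing, $h(0)=0$, $h'(0)>0$; $\lambda\ge\delta>0$ are constants. The notation $(h'/\varphi')^{-1}(y)\vee0$ means the inverse of the increasing function $h'/\varphi'$ at $y$ when defined and nonnegative, and $0$ otherwise. *)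

(* Defs.v *)
From Stdlib Require Import Reals Lra ClassicalEpsilon.
From Coquelicot Require Import Coquelicot.
Open Scope R_scope.

(* Generalized inverse: the (unique, under strict monotonicity) x with P x and
   f x = y, if such an x exists; 0 otherwise. *)
Definition inv_on (P : R -> Prop) (f : R -> R) (y : R) : R :=
  match excluded_middle_informative (exists x, P x /\ f x = y) with
  | left H => proj1_sig (constructive_indefinite_description _ H)
  | right _ => 0
  end.

Definition inv_dU (dU : R -> R) (y : R) : R := inv_on (fun x => 0 < x) dU y.

(* (h'/phi')^{-1}(y) \/ 0 : the inverse of h'/phi' (defined on [0,oo)) at y
   when it is defined (and then it is nonnegative), and 0 otherwise. *)
Definition inv_hphi (dh dphi : R -> R) (y : R) : R :=
  inv_on (fun x => 0 <= x) (fun x => dh x / dphi x) y.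

Definition C2_on_nonneg (f df d2f : R -> R) : Prop :=
  (forall x, 0 < x -> is_derive f x (df x)) /\
  (forall x, 0 < x -> is_derive df x (d2f x)) /\
  (forall x, 0 < x -> continuous d2f x) /\
  filterlim f (at_right 0) (locally (f 0)) /\
  filterlim df (at_right 0) (locally (df 0)) /\
  filterlim d2f (at_right 0) (locally (d2f 0)).

(* f is continuous on [0,oo) and C^2 on (0,oo) (used for U, whose derivative
   blows up at 0). *)
Definition C2_on_pos_cont0 (f df d2f : R -> R) : Prop :=
  (forall x, 0 < x -> is_derive f x (df x)) /\
  (forall x, 0 < x -> is_derive df x (d2f x)) /\
  (forall x, 0 < x -> continuous d2f x) /\
  filterlim f (at_right 0) (locally (f 0)).

Definition strictly_concave_nonneg (f : R -> R) : Prop :=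
  forall x y t, 0 <= x -> 0 <= y -> x <> y -> 0 < t < 1 ->
    t * f x + (1 - t) * f y < f (t * x + (1 - t) * y).

Definition strictly_convex_nonneg (f : R -> R) : Prop :=
  forall x y t, 0 <= x -> 0 <= y -> x <> y -> 0 < t < 1 ->
    f (t * x + (1 - t) * y) < t * f x + (1 - t) * f y.

Definition increasing_nonneg (f : R -> R) : Prop :=
  forall x y, 0 <= x -> x < y -> f x < f y.

Definition nonneg_valued (f : R -> R) : Prop :=
  forall x, 0 <= x -> 0 <= f x.

Definition G (lam del : R) (U dU h dh dphi : R -> R) (lamLag : R) : R :=
  RInt_gen
    (fun s => exp (- lam * s) *
       (U (inv_dU dU (/ lamLag * exp ((lam - del) * s)))
        - h (inv_hphi dh dphi (/ lamLag * exp ((lam - del) * s)))))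
    (at_point 0) (Rbar_locally p_infty).

(* Main.v *)
Require Import Defs.
From Stdlib Require Import Reals Lra Psatz ClassicalEpsilon.
From Coquelicot Require Import Coquelicot.
Open Scope R_scope.

Lemma ball_R (x e y : R) : ball x e y <-> Rabs (y - x) < e.
Proof. unfold ball; simpl; unfold AbsRing_ball, abs, minus, plus, opp; simpl. tauto. Qed.

Lemma eps_delta_cont (f : R -> R) (x : R) :
  (forall e, 0 < e -> exists d, 0 < d /\ forall y, Rabs (y - x) < d -> Rabs (f y - f x) < e) ->
  continuous f x.
Proof.
  intros H. apply filterlim_locally. intros [e He]. simpl.
  destruct (H e He) as [d [Hd Hy]]. exists (mkposreal d Hd). intros y Hb.
  apply ball_R. apply ball_R in Hb. simpl in Hb. auto.
Qed.

Lemma cont_eps_delta (f : R -> R) (x : R) : continuous f x ->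
  forall e, 0 < e -> exists d, 0 < d /\ forall y, Rabs (y - x) < d -> Rabs (f y - f x) < e.
Proof.
  intros H e He. apply filterlim_locally with (eps := mkposreal e He) in H.
  destruct H as [d Hd]. exists d. split. apply cond_pos. intros y Hy.
  specialize (Hd y). apply ball_R in Hd. exact Hd. apply ball_R. exact Hy.
Qed.

Lemma at_right_pt (P : R -> Prop) (b : R) : at_right 0 P -> 0 < b -> exists z, 0 < z < b /\ P z.
Proof.
  intros [d Hd] Hb. exists (Rmin (d/2) (b/2)). assert (0 < d) by apply cond_pos.
  split. split. apply Rmin_glb_lt; lra. assert (Rmin (d/2) (b/2) <= b/2) by apply Rmin_r. lra.
  apply Hd. apply ball_R. rewrite Rminus_0_r. rewrite Rabs_pos_eq.
  assert (Rmin (d/2) (b/2) <= d/2) by apply Rmin_l. lra.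
  apply Rlt_le, Rmin_glb_lt; lra. apply Rmin_glb_lt; lra.
Qed.

Lemma at_right_lim (f : R -> R) (l : R) : filterlim f (at_right 0) (locally l) ->
  forall e b, 0 < e -> 0 < b -> exists z, 0 < z < b /\ Rabs (f z - l) < e.
Proof.
  intros H e b He Hb. apply filterlim_locally with (eps := mkposreal e He) in H.
  destruct (at_right_pt _ b H Hb) as [z [Hz Hz2]]. exists z. split; [exact Hz|].
  apply ball_R in Hz2. exact Hz2.
Qed.

Lemma tangent_weak (f : R -> R) (x d y : R) : strictly_convex_nonneg f -> 0 < x ->
  is_derive f x d -> 0 <= y -> f x + d * (y - x) <= f y.
Proof.
  intros Hc Hx Hd Hy.
  destruct (Req_dec y x) as [->|Hne]. lra.
  apply Rnot_lt_le. intros Hlt.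
  set (e := f x + d * (y - x) - f y).
  assert (He : 0 < e) by (unfold e; lra).
  assert (Hyx : 0 < Rabs (y - x)) by (apply Rabs_pos_lt; lra).
  apply is_derive_Reals in Hd.
  destruct (Hd (e / (2 * Rabs (y - x)))) as [dl Hdl].
  { apply Rdiv_lt_0_compat; lra. }
  assert (Hdl0 := cond_pos dl).
  set (t := Rmin (1/2) (dl / (2 * Rabs (y - x)))).
  assert (Ht0 : 0 < t) by (apply Rmin_glb_lt; [lra| apply Rdiv_lt_0_compat; lra]).
  assert (Ht1 : t <= 1/2) by apply Rmin_l.
  assert (Ht2 : t <= dl / (2 * Rabs (y - x))) by apply Rmin_r.
  set (h := t * (y - x)).
  assert (Hh0 : h <> 0) by (unfold h; apply Rmult_integral_contrapositive; split; lra).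
  assert (Hhabs : Rabs h = t * Rabs (y - x)) by (unfold h; rewrite Rabs_mult, Rabs_pos_eq; lra).
  assert (Hhd : Rabs h < dl).
  { rewrite Hhabs. apply Rle_lt_trans with (dl / (2 * Rabs (y - x)) * Rabs (y - x)).
    apply Rmult_le_compat_r; lra. field_simplify; lra. }
  specialize (Hdl h Hh0 Hhd).
  assert (Hq : Rabs (f (x + h) - f x - d * h) < e / 2 * t).
  { replace (f (x + h) - f x - d * h) with (h * ((f (x + h) - f x) / h - d)) by (field; auto).
    rewrite Rabs_mult, Hhabs.
    apply Rlt_le_trans with (t * Rabs (y - x) * (e / (2 * Rabs (y - x)))).
    apply Rmult_lt_compat_l. nra. exact Hdl. right. field. lra. }
  assert (Hconv : f (x + h) < t * f y + (1 - t) * f x).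
  { replace (x + h) with (t * y + (1 - t) * x) by (unfold h; ring).
    apply Hc; auto; lra. }
  apply Rabs_def2 in Hq. destruct Hq as [Hq1 Hq2].
  unfold e in *. unfold h in *. nra.
Qed.

Lemma tangent_strict (f : R -> R) (x d y : R) : strictly_convex_nonneg f -> 0 < x ->
  is_derive f x d -> 0 <= y -> y <> x -> f x + d * (y - x) < f y.
Proof.
  intros Hc Hx Hd Hy Hne.
  assert (H1 := tangent_weak f x d ((x + y) / 2) Hc Hx Hd ltac:(lra)).
  assert (H2 : f (1/2 * x + (1 - 1/2) * y) < 1/2 * f x + (1 - 1/2) * f y).
  { apply Hc; auto; lra. }
  replace (1/2 * x + (1 - 1/2) * y) with ((x + y) / 2) in H2 by field. lra.
Qed.

Lemma deriv_incr (f : R -> R) (x y dx dy : R) : strictly_convex_nonneg f -> 0 < x -> x < y ->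
  is_derive f x dx -> is_derive f y dy -> dx < dy.
Proof.
  intros Hc Hx Hxy H1 H2.
  assert (A := tangent_strict f x dx y Hc Hx H1 ltac:(lra) ltac:(lra)).
  assert (B := tangent_strict f y dy x Hc ltac:(lra) H2 ltac:(lra) ltac:(lra)).
  nra.
Qed.

Lemma concave_convex (f : R -> R) : strictly_concave_nonneg f -> strictly_convex_nonneg (fun x => - f x).
Proof. intros H x y t Hx Hy Hne Ht. specialize (H x y t Hx Hy Hne Ht). lra. Qed.

Lemma tangent_strict_conc (f : R -> R) (x d y : R) : strictly_concave_nonneg f -> 0 < x ->
  is_derive f x d -> 0 <= y -> y <> x -> f y < f x + d * (y - x).
Proof.
  intros Hc Hx Hd Hy Hne.
  assert (Hd' : is_derive (fun x => - f x) x (- d)).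
  { apply (is_derive_opp f x d Hd). }
  assert (A := tangent_strict _ x (-d) y (concave_convex f Hc) Hx Hd' Hy Hne). simpl in A. lra.
Qed.

Lemma deriv_decr (f : R -> R) (x y dx dy : R) : strictly_concave_nonneg f -> 0 < x -> x < y ->
  is_derive f x dx -> is_derive f y dy -> dy < dx.
Proof.
  intros Hc Hx Hxy H1 H2.
  assert (A := tangent_strict_conc f x dx y Hc Hx H1 ltac:(lra) ltac:(lra)).
  assert (B := tangent_strict_conc f y dy x Hc ltac:(lra) H2 ltac:(lra) ltac:(lra)).
  nra.
Qed.

Lemma incr_right_lim (f : R -> R) (l : R) : (forall a b, 0 < a -> a < b -> f a < f b) ->
  filterlim f (at_right 0) (locally l) -> forall x, 0 < x -> l < f x.
Proof.
  intros Hi Hl x Hx.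
  assert (l <= f (x/2)).
  { apply Rnot_lt_le. intros Hlt.
    destruct (at_right_lim f l Hl (l - f (x/2)) (x/2) ltac:(lra) ltac:(lra)) as [z [Hz Hz2]].
    apply Rabs_def2 in Hz2. assert (f z < f (x/2)) by (apply Hi; lra). lra. }
  assert (f (x/2) < f x) by (apply Hi; lra). lra.
Qed.

Lemma decr_right_lim (f : R -> R) (l : R) : (forall a b, 0 < a -> a < b -> f b < f a) ->
  filterlim f (at_right 0) (locally l) -> forall x, 0 < x -> f x < l.
Proof.
  intros Hi Hl x Hx.
  assert (f (x/2) <= l).
  { apply Rnot_lt_le. intros Hlt.
    destruct (at_right_lim f l Hl (f (x/2) - l) (x/2) ltac:(lra) ltac:(lra)) as [z [Hz Hz2]].
    apply Rabs_def2 in Hz2. assert (f (x/2) < f z) by (apply Hi; lra). lra. }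
  assert (f x < f (x/2)) by (apply Hi; lra). lra.
Qed.


Lemma exp_small (t d : R) : 0 < t -> 0 < d -> exists N, 0 < N /\ exp (- d * N) < t.
Proof.
  intros Ht Hd. exists (/ (t * d) + 1). split.
  { assert (0 < / (t * d)) by (apply Rinv_0_lt_compat, Rmult_lt_0_compat; lra). lra. }
  set (N := / (t * d) + 1).
  assert (HN : d * N = / t + d) by (unfold N; field; split; lra).
  assert (H1 : 1 + d * N < exp (d * N)) by (apply exp_ineq1; assert (0 < / (t * d)) by (apply Rinv_0_lt_compat, Rmult_lt_0_compat; lra); unfold N; intro; nra).
  replace (- d * N) with (- (d * N)) by ring. rewrite exp_Ropp.
  assert (0 < /t) by (apply Rinv_0_lt_compat; lra).
  apply Rlt_le_trans with (/ (1 + d * N)).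
  apply Rinv_lt_contravar; nra.
  rewrite HN. apply Rle_trans with (/ (/ t)). apply Rinv_le_contravar; lra.
  rewrite Rinv_inv; lra.
Qed.

Lemma exp_int (C d a b : R) : 0 < d -> a <= b ->
  is_RInt (fun s => C * exp (- d * s)) a b (C / d * (exp (- d * a) - exp (- d * b))).
Proof.
  intros Hd Hab.
  replace (C / d * (exp (- d * a) - exp (- d * b))) with
     (minus ((fun s => - C / d * exp (- d * s)) b) ((fun s => - C / d * exp (- d * s)) a)).
  2:{ unfold minus, plus, opp; simpl. field. lra. }
  apply (is_RInt_derive (fun s => - C / d * exp (- d * s)) (fun s => C * exp (- d * s))).
  - intros x _. auto_derive. auto. field. lra.
  - intros x _. apply (ex_derive_continuous (fun s => C * exp (- d * s))). auto_derive. auto.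
Qed.

Lemma tail_bound (f : R -> R) (C d N x : R) : (forall s, continuous f s) -> 0 < d ->
  (forall s, 0 <= s -> Rabs (f s) <= C * exp (- d * s)) -> 0 <= N -> N <= x ->
  Rabs (RInt f N x) <= C / d * exp (- d * N).
Proof.
  intros Hc Hd Hb HN Hx.
  assert (Hex : ex_RInt f N x) by (apply (ex_RInt_continuous (V:=R_CompleteNormedModule)); auto).
  eapply Rle_trans. apply abs_RInt_le; auto.
  eapply Rle_trans. apply RInt_le with (g := fun s => C * exp (- d * s)); auto.
  - apply (ex_RInt_continuous (V:=R_CompleteNormedModule)). intros z _. apply (continuous_comp f Rabs). auto.
    apply continuous_Rabs.
  - eexists. apply exp_int; auto.
  - intros z Hz. apply Hb. lra.
  - rewrite (is_RInt_unique _ _ _ _ (exp_int C d N x Hd Hx)).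
    assert (0 < exp (- d * x)) by apply exp_pos.
    assert (0 <= C).
    { assert (HH := Hb N HN). assert (0 < exp (- d * N)) by apply exp_pos.
      assert (0 <= Rabs (f N)) by apply Rabs_pos. nra. }
    assert (0 <= C / d) by (apply Rdiv_le_0_compat; lra). nra.
Qed.

Lemma exRI (f : R -> R) a b : (forall s, continuous f s) -> ex_RInt f a b.
Proof. intros Hc. apply (ex_RInt_continuous (V:=R_CompleteNormedModule)). auto. Qed.

Lemma improper (f : R -> R) (C d : R) : (forall s, continuous f s) -> 0 < d -> 0 < C ->
  (forall s, 0 <= s -> Rabs (f s) <= C * exp (- d * s)) ->
  exists L, filterlim (fun x => RInt f 0 x) (Rbar_locally p_infty) (locally L) /\
    RInt_gen f (at_point 0) (Rbar_locally p_infty) = L.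
Proof.
  intros Hc Hd HC Hb.
  assert (Hch : forall N x, RInt f 0 x - RInt f 0 N = RInt f N x).
  { intros N x. rewrite <- (RInt_Chasles f 0 N x) by (apply exRI; auto).
    unfold plus; simpl. ring. }
  assert (Hcv : exists L, filterlim (fun x => RInt f 0 x) (Rbar_locally p_infty) (locally L)).
  { apply (filterlim_locally_cauchy (F := Rbar_locally p_infty)).
    intros [e He]. simpl.
    destruct (exp_small (e * d / (2 * C)) d) as [N [HN HNe]].
    { apply Rdiv_lt_0_compat; nra. } auto.
    exists (fun x => N < x). split. exists N. auto.
    intros u v Hu Hv. apply ball_R.
    assert (A := tail_bound f C d N u Hc Hd Hb ltac:(lra) ltac:(lra)).
    assert (B := tail_bound f C d N v Hc Hd Hb ltac:(lra) ltac:(lra)).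
    rewrite <- Hch in A, B.
    assert (C / d * exp (- d * N) < e / 2).
    { apply Rlt_le_trans with (C / d * (e * d / (2 * C))).
      apply Rmult_lt_compat_l. apply Rdiv_lt_0_compat; lra. auto.
      right. field. lra. }
    replace (RInt f 0 v - RInt f 0 u) with ((RInt f 0 v - RInt f 0 N) - (RInt f 0 u - RInt f 0 N)) by ring.
    eapply Rle_lt_trans. apply Rabs_triang. rewrite Rabs_Ropp. lra. }
  destruct Hcv as [L HL]. exists L. split; auto.
  apply is_RInt_gen_unique.
  unfold is_RInt_gen, filterlimi, filter_le, filtermapi. intros P HP.
  assert (HP' := HL P HP). destruct HP' as [M HM].
  exists (fun x => x = 0) (fun y => M < y).
  - reflexivity.
  - exists M. auto.
  - intros x y Hx Hy. simpl. subst x. exists (RInt f 0 y). split.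
    apply (RInt_correct (V:=R_CompleteNormedModule)). apply exRI; auto.
    apply HM. auto.
Qed.


Lemma inv_on_spec (P : R -> Prop) (f : R -> R) (y : R) :
  (exists x, P x /\ f x = y) -> P (inv_on P f y) /\ f (inv_on P f y) = y.
Proof.
  intros H. unfold inv_on. destruct (excluded_middle_informative _) as [H'|H'].
  - exact (proj2_sig (constructive_indefinite_description _ H')).
  - contradiction.
Qed.

Lemma inv_on_none (P : R -> Prop) (f : R -> R) (y : R) :
  ~ (exists x, P x /\ f x = y) -> inv_on P f y = 0.
Proof.
  intros H. unfold inv_on. destruct (excluded_middle_informative _) as [H'|H']; auto. contradiction.
Qed.

Lemma deriv_cont_pt (f df : R -> R) x : is_derive f x (df x) -> continuity_pt f x.
Proof.
  intros H. apply derivable_continuous_pt. exists (df x). apply is_derive_Reals. auto.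
Qed.

Lemma deriv_cont (f df : R -> R) x : is_derive f x (df x) -> continuous f x.
Proof.
  intros H. apply (ex_derive_continuous (V:=R_NormedModule)). exists (df x). auto.
Qed.

Lemma conc_deriv_pos (f df : R -> R) x : strictly_concave_nonneg f -> increasing_nonneg f ->
  0 < x -> is_derive f x (df x) -> 0 < df x.
Proof.
  intros Hc Hi Hx Hd. apply Rnot_le_lt. intros Hle.
  assert (A := tangent_strict_conc f x (df x) (x + 1) Hc Hx Hd ltac:(lra) ltac:(lra)).
  assert (B := Hi x (x + 1) ltac:(lra) ltac:(lra)). nra.
Qed.

Lemma decr_rev (g : R -> R) p q : (forall a b, 0 < a -> a < b -> g b < g a) -> 0 < p -> 0 < q ->
  g p > g q -> p < q.
Proof.
  intros Hd Hp Hq H. destruct (Rlt_le_dec p q) as [|Hle]; auto.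
  destruct (Rle_lt_or_eq_dec _ _ Hle) as [Hlt|Heq].
  - specialize (Hd q p Hq Hlt). lra.
  - subst. lra.
Qed.

Definition UH (U dU d2U : R -> R) : Prop := C2_on_pos_cont0 U dU d2U /\
  strictly_concave_nonneg U /\ increasing_nonneg U /\
  filterlim dU (Rbar_locally p_infty) (locally 0) /\
  filterlim dU (at_right 0) (Rbar_locally p_infty).

Lemma dU_der {U dU d2U : R -> R} (HU : UH U dU d2U) x : 0 < x -> is_derive U x (dU x).
Proof. pose proof HU as (HU_C2 & HU_conc & HU_incr & HdU_inf & HdU_0). destruct HU_C2 as [H _]. auto. Qed.

Lemma dU_pos {U dU d2U : R -> R} (HU : UH U dU d2U) x : 0 < x -> 0 < dU x.
Proof. pose proof HU as (HU_C2 & HU_conc & HU_incr & HdU_inf & HdU_0). intros Hx. apply (conc_deriv_pos U dU x); auto. apply (dU_der HU); auto. Qed.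

Lemma dU_decr {U dU d2U : R -> R} (HU : UH U dU d2U) : forall a b, 0 < a -> a < b -> dU b < dU a.
Proof. pose proof HU as (HU_C2 & HU_conc & HU_incr & HdU_inf & HdU_0). intros a b Ha Hab. apply (deriv_decr U a b); auto; apply (dU_der HU); lra. Qed.

Lemma dU_cpt {U dU d2U : R -> R} (HU : UH U dU d2U) x : 0 < x -> continuity_pt dU x.
Proof. pose proof HU as (HU_C2 & HU_conc & HU_incr & HdU_inf & HdU_0). intros Hx. destruct HU_C2 as [_ [H _]]. apply (deriv_cont_pt dU d2U). auto. Qed.

Lemma dU_onto {U dU d2U : R -> R} (HU : UH U dU d2U) y : 0 < y -> exists x, 0 < x /\ dU x = y.
Proof. pose proof HU as (HU_C2 & HU_conc & HU_incr & HdU_inf & HdU_0).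
  intros Hy.
  assert (Ha : exists a, 0 < a /\ y < dU a).
  { assert (H : at_right 0 (fun z => y < dU z)).
    { apply HdU_0. exists y. auto. }
    destruct (at_right_pt _ 1 H ltac:(lra)) as [a [Ha Ha2]]. exists a. split; [lra|auto]. }
  destruct Ha as [a [Ha Hya]].
  assert (Hb : exists b, a < b /\ dU b < y).
  { assert (H := proj1 (filterlim_locally dU 0) HdU_inf (mkposreal y Hy)).
    destruct H as [M HM]. exists (Rmax M a + 1). split.
    assert (a <= Rmax M a) by apply Rmax_r. lra.
    assert (M <= Rmax M a) by apply Rmax_l.
    specialize (HM (Rmax M a + 1) ltac:(lra)). apply ball_R in HM. simpl in HM.
    apply Rabs_def2 in HM. unfold minus, plus, opp in HM; simpl in HM. lra. }
  destruct Hb as [b [Hab Hyb]].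
  destruct (Ranalysis5.IVT_interv (fun x => y - dU x) a b) as [x [Hx1 Hx2]].
  - intros z Hz. apply continuity_pt_minus. apply continuity_pt_const.
    intros p q; auto. apply (dU_cpt HU). lra.
  - auto.
  - cbv beta. lra.
  - cbv beta; lra.
  - cbv beta in Hx2. exists x. split. lra. lra.
Qed.

Definition iU (dU : R -> R) y := inv_dU dU y.

Lemma iU_spec {U dU d2U : R -> R} (HU : UH U dU d2U) y : 0 < y -> 0 < iU dU y /\ dU (iU dU y) = y.
Proof. pose proof HU as (HU_C2 & HU_conc & HU_incr & HdU_inf & HdU_0). intros Hy. apply inv_on_spec. apply (dU_onto HU); auto. Qed.

Lemma iU_decr {U dU d2U : R -> R} (HU : UH U dU d2U) y1 y2 : 0 < y1 -> y1 < y2 -> iU dU y2 < iU dU y1.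
Proof. pose proof HU as (HU_C2 & HU_conc & HU_incr & HdU_inf & HdU_0).
  intros H1 H2. destruct (iU_spec HU y1 H1) as [A1 B1]. destruct (iU_spec HU y2 ltac:(lra)) as [A2 B2].
  apply (decr_rev dU); auto. apply (dU_decr HU). lra.
Qed.

Lemma uu_decr {U dU d2U : R -> R} (HU : UH U dU d2U) y1 y2 : 0 < y1 -> y1 < y2 -> U (iU dU y2) < U (iU dU y1).
Proof. pose proof HU as (HU_C2 & HU_conc & HU_incr & HdU_inf & HdU_0).
  intros H1 H2. apply HU_incr. destruct (iU_spec HU y2 ltac:(lra)). lra. apply (iU_decr HU); auto.
Qed.

Lemma iU_cont {U dU d2U : R -> R} (HU : UH U dU d2U) y0 : 0 < y0 -> continuous (iU dU) y0.
Proof. pose proof HU as (HU_C2 & HU_conc & HU_incr & HdU_inf & HdU_0).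
  intros Hy0. apply eps_delta_cont. intros e He.
  destruct (iU_spec HU y0 Hy0) as [Hx0 Hdx0]. set (x0 := iU dU y0) in *.
  set (e' := Rmin (e/2) (x0/2)).
  assert (He1 : e' <= e/2) by apply Rmin_l. assert (He2 : e' <= x0/2) by apply Rmin_r.
  assert (He0 : 0 < e') by (apply Rmin_glb_lt; lra).
  assert (Hb : dU (x0 + e') < y0) by (rewrite <- Hdx0; apply (dU_decr HU); lra).
  assert (Ha : y0 < dU (x0 - e')) by (rewrite <- Hdx0; apply (dU_decr HU); lra).
  exists (Rmin (y0 - dU (x0 + e')) (dU (x0 - e') - y0)). split.
  apply Rmin_glb_lt; lra. intros y Hy.
  assert (Hm1 := Rmin_l (y0 - dU (x0 + e')) (dU (x0 - e') - y0)).
  assert (Hm2 := Rmin_r (y0 - dU (x0 + e')) (dU (x0 - e') - y0)).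
  apply Rabs_def2 in Hy. destruct Hy as [Hy1 Hy2].
  assert (Hpos := dU_pos HU (x0 + e') ltac:(lra)).
  destruct (iU_spec HU y ltac:(lra)) as [Hx Hdx].
  assert (iU dU y < x0 + e') by (apply (decr_rev dU); auto; [apply (dU_decr HU)|lra|lra]).
  assert (x0 - e' < iU dU y) by (apply (decr_rev dU); auto; [apply (dU_decr HU)|lra|lra]).
  apply Rabs_def1; lra.
Qed.

Lemma uu_cont {U dU d2U : R -> R} (HU : UH U dU d2U) y0 : 0 < y0 -> continuous (fun y => U (iU dU y)) y0.
Proof. pose proof HU as (HU_C2 & HU_conc & HU_incr & HdU_inf & HdU_0).
  intros Hy0. apply (continuous_comp (iU dU) U). apply (iU_cont HU); auto.
  apply (deriv_cont U dU). apply (dU_der HU). apply (iU_spec HU); auto.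
Qed.



Definition HP (phi dphi d2phi h dh d2h : R -> R) : Prop :=
  C2_on_nonneg phi dphi d2phi /\ strictly_concave_nonneg phi /\
  (exists M, forall x, 0 <= x -> phi x <= M) /\ increasing_nonneg phi /\
  phi 0 = 0 /\ 0 < dphi 0 /\
  C2_on_nonneg h dh d2h /\ strictly_convex_nonneg h /\ increasing_nonneg h /\
  nonneg_valued h /\ h 0 = 0 /\ 0 < dh 0.

Ltac dHP H := pose proof H as (Hphi_C2 & Hphi_conc & Hphi_bdd & Hphi_incr & Hphi0 & Hdphi0 &
   Hh_C2 & Hh_conv & Hh_incr & Hh_nn & Hh0 & Hdh0).

Definition rr (dh dphi : R -> R) x := dh x / dphi x.

Lemma dphi_pos {phi dphi d2phi h dh d2h : R -> R} (H : HP phi dphi d2phi h dh d2h) x :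
  0 <= x -> 0 < dphi x.
Proof.
  dHP H. intros Hx. destruct (Rle_lt_or_eq_dec _ _ Hx) as [Hx'|<-]; auto.
  apply (conc_deriv_pos phi dphi x); auto. apply Hphi_C2; auto.
Qed.

Lemma dphi_decr {phi dphi d2phi h dh d2h : R -> R} (H : HP phi dphi d2phi h dh d2h) a b :
  0 <= a -> a < b -> dphi b < dphi a.
Proof.
  dHP H. intros Ha Hab.
  assert (Hd : forall a b, 0 < a -> a < b -> dphi b < dphi a).
  { intros p q Hp Hpq. apply (deriv_decr phi p q); auto; apply Hphi_C2; lra. }
  destruct (Rle_lt_or_eq_dec _ _ Ha) as [Ha'|<-]; auto.
  apply (decr_right_lim dphi (dphi 0)); [exact Hd | apply Hphi_C2 | lra].
Qed.

Lemma dh_incr {phi dphi d2phi h dh d2h : R -> R} (H : HP phi dphi d2phi h dh d2h) a b :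
  0 <= a -> a < b -> dh a < dh b.
Proof.
  dHP H. intros Ha Hab.
  assert (Hd : forall a b, 0 < a -> a < b -> dh a < dh b).
  { intros p q Hp Hpq. apply (deriv_incr h p q); auto; apply Hh_C2; lra. }
  destruct (Rle_lt_or_eq_dec _ _ Ha) as [Ha'|<-]; auto.
  apply (incr_right_lim dh (dh 0)); [exact Hd | apply Hh_C2 | lra].
Qed.

Lemma dh_pos {phi dphi d2phi h dh d2h : R -> R} (H : HP phi dphi d2phi h dh d2h) x :
  0 <= x -> 0 < dh x.
Proof.
  intros Hx. pose proof H as (_&_&_&_&_&_&_&_&_&_&_&Hdh0).
  destruct (Rle_lt_or_eq_dec _ _ Hx) as [Hx'|<-]; auto.
  assert (dh 0 < dh x) by (apply (dh_incr H); lra). lra.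
Qed.

Lemma rr_incr {phi dphi d2phi h dh d2h : R -> R} (H : HP phi dphi d2phi h dh d2h) a b :
  0 <= a -> a < b -> rr dh dphi a < rr dh dphi b.
Proof.
  intros Ha Hab. unfold rr.
  assert (A := dh_incr H a b Ha Hab). assert (B := dphi_decr H a b Ha Hab).
  assert (C := dphi_pos H b ltac:(lra)). assert (D := dh_pos H a Ha).
  apply Rmult_lt_reg_r with (dphi a * dphi b). nra.
  field_simplify; try lra. nra.
Qed.

Lemma rr_rev {phi dphi d2phi h dh d2h : R -> R} (H : HP phi dphi d2phi h dh d2h) a b :
  0 <= a -> 0 <= b -> rr dh dphi a < rr dh dphi b -> a < b.
Proof.
  intros Ha Hb Hr. destruct (Rlt_le_dec a b) as [|Hle]; auto.
  destruct (Rle_lt_or_eq_dec _ _ Hle) as [Hlt|Heq].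
  - assert (A := rr_incr H b a Hb Hlt). lra.
  - subst. lra.
Qed.

Lemma rr_rev_le {phi dphi d2phi h dh d2h : R -> R} (H : HP phi dphi d2phi h dh d2h) a b :
  0 <= a -> 0 <= b -> rr dh dphi a <= rr dh dphi b -> a <= b.
Proof.
  intros Ha Hb Hr. destruct (Rle_lt_dec a b) as [|Hlt]; auto.
  assert (A := rr_incr H b a Hb Hlt). lra.
Qed.

Lemma rr_cpt {phi dphi d2phi h dh d2h : R -> R} (H : HP phi dphi d2phi h dh d2h) x :
  0 < x -> continuity_pt (rr dh dphi) x.
Proof.
  dHP H. intros Hx. unfold rr. apply continuity_pt_div.
  apply (deriv_cont_pt dh d2h). apply Hh_C2; auto.
  apply (deriv_cont_pt dphi d2phi). apply Hphi_C2; auto.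
  assert (A := dphi_pos H x ltac:(lra)). lra.
Qed.

Lemma rr_unbounded {phi dphi d2phi h dh d2h : R -> R} (H : HP phi dphi d2phi h dh d2h) y :
  exists X, 0 < X /\ y < rr dh dphi X.
Proof.
  dHP H. apply NNPP. intros Hn.
  assert (Hall : forall X, 0 < X -> rr dh dphi X <= y).
  { intros X HX. apply Rnot_lt_le. intros Hl. apply Hn. exists X. auto. }
  destruct Hphi_bdd as [M HM].
  assert (Hy : 0 < y).
  { assert (A := Hall 1 ltac:(lra)). unfold rr in A.
    assert (0 < dh 1 / dphi 1). apply Rdiv_lt_0_compat. apply (dh_pos H); lra. apply (dphi_pos H); lra.
    lra. }
  set (m := dh 0 / y). assert (Hm : 0 < m) by (apply Rdiv_lt_0_compat; lra).
  assert (HM0 : 0 <= M) by (rewrite <- Hphi0; apply HM; lra).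
  set (X := (M + 1) / m). assert (HX : 0 < X) by (apply Rdiv_lt_0_compat; lra).
  assert (A := Hall X HX). unfold rr in A.
  assert (B := dphi_pos H X ltac:(lra)). assert (C := dh_incr H 0 X ltac:(lra) HX).
  assert (A' : dh X <= y * dphi X).
  { replace (dh X) with (dh X / dphi X * dphi X) by (field; lra). apply Rmult_le_compat_r; lra. }
  assert (Hd : m <= dphi X).
  { unfold m. apply Rmult_le_reg_r with y; auto. unfold Rdiv. rewrite Rmult_assoc, Rinv_l, Rmult_1_r; lra. }
  assert (T := tangent_strict_conc phi X (dphi X) 0 Hphi_conc HX ltac:(apply Hphi_C2; auto) ltac:(lra) ltac:(lra)).
  assert (HMX := HM X ltac:(lra)).
  assert (m * X = M + 1) by (unfold X; field; lra).
  nra.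
Qed.

Ltac bR H := apply ball_R in H; unfold minus, plus, opp in H; simpl in H.

Lemma rr_near0 {phi dphi d2phi h dh d2h : R -> R} (H : HP phi dphi d2phi h dh d2h) y :
  rr dh dphi 0 < y -> exists x, 0 < x /\ rr dh dphi x < y.
Proof.
  dHP H. intros Hy. unfold rr in *.
  assert (Hy' : dh 0 < y * dphi 0).
  { replace (dh 0) with (dh 0 / dphi 0 * dphi 0) by (field; lra). apply Rmult_lt_compat_r; lra. }
  assert (Hy0 : 0 < y). { assert (0 < dh 0 / dphi 0) by (apply Rdiv_lt_0_compat; lra). lra. }
  set (g := y * dphi 0 - dh 0). assert (Hg : 0 < g) by (unfold g; lra).
  destruct Hh_C2 as (_&_&_&_&Hdh_lim&_). destruct Hphi_C2 as (_&_&_&_&Hdphi_lim&_).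
  assert (F1 := proj1 (filterlim_locally dh (dh 0)) Hdh_lim (mkposreal (g/2) ltac:(lra))).
  assert (F2 := proj1 (filterlim_locally dphi (dphi 0)) Hdphi_lim (mkposreal (g/(2*y)) ltac:(apply Rdiv_lt_0_compat; lra))).
  destruct (at_right_pt _ 1 (filter_and _ _ F1 F2) ltac:(lra)) as [z [Hz [B1 B2]]].
  apply ball_R, Rabs_def2 in B1. apply ball_R, Rabs_def2 in B2. unfold minus, plus, opp in B1, B2; simpl in B1, B2.
  exists z. split. lra.
  assert (Hpz := dphi_pos H z ltac:(lra)).
  assert (E : y * (g / (2 * y)) = g / 2) by (field; lra).
  assert (E2 : y * (- (g / (2 * y))) < y * (dphi z - dphi 0)) by (apply Rmult_lt_compat_l; lra).
  assert (dh z < y * dphi z) by (unfold g in *; lra).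
  apply Rmult_lt_reg_r with (dphi z); auto. field_simplify; lra.
Qed.

Lemma rr_onto {phi dphi d2phi h dh d2h : R -> R} (H : HP phi dphi d2phi h dh d2h) y :
  rr dh dphi 0 < y -> exists x, 0 < x /\ rr dh dphi x = y.
Proof.
  intros Hy. destruct (rr_near0 H y Hy) as [a [Ha Hya]].
  destruct (rr_unbounded H y) as [b [Hb Hyb]].
  assert (Hab : a < b) by (apply (rr_rev H); lra).
  destruct (Ranalysis5.IVT_interv (fun x => rr dh dphi x - y) a b) as [x [Hx1 Hx2]].
  - intros z Hz. apply continuity_pt_minus. apply (rr_cpt H). lra. apply continuity_pt_const.
    intros p q; auto.
  - auto.
  - cbv beta. lra.
  - cbv beta. lra.
  - cbv beta in Hx2. exists x. split; lra.
Qed.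

Definition iH (dh dphi : R -> R) y := inv_on (fun x => 0 <= x) (rr dh dphi) y.

Lemma iH_def dh dphi y : inv_hphi dh dphi y = iH dh dphi y.
Proof. reflexivity. Qed.

Lemma iH_nonneg dh dphi y : 0 <= iH dh dphi y.
Proof.
  unfold iH, inv_on. destruct (excluded_middle_informative _) as [H'|H'].
  - exact (proj1 (proj2_sig (constructive_indefinite_description _ H'))).
  - lra.
Qed.

Lemma iH_spec {phi dphi d2phi h dh d2h : R -> R} (H : HP phi dphi d2phi h dh d2h) y :
  rr dh dphi 0 <= y -> rr dh dphi (iH dh dphi y) = y.
Proof.
  intros Hy. apply inv_on_spec. destruct (Rle_lt_or_eq_dec _ _ Hy) as [Hlt|Heq].
  - destruct (rr_onto H y Hlt) as [x [Hx Hx2]]. exists x. split; auto; lra.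
  - exists 0. split; auto; lra.
Qed.

Lemma iH_low {phi dphi d2phi h dh d2h : R -> R} (H : HP phi dphi d2phi h dh d2h) y :
  y < rr dh dphi 0 -> iH dh dphi y = 0.
Proof.
  intros Hy. apply inv_on_none. intros [x [Hx Hx2]].
  destruct (Rle_lt_or_eq_dec _ _ Hx) as [Hlt|Heq].
  - assert (A := rr_incr H 0 x ltac:(lra) Hlt). lra.
  - subst. lra.
Qed.

Lemma iH_upper {phi dphi d2phi h dh d2h : R -> R} (H : HP phi dphi d2phi h dh d2h) y b :
  0 < b -> y < rr dh dphi b -> iH dh dphi y < b.
Proof.
  intros Hb Hy. destruct (Rlt_le_dec y (rr dh dphi 0)) as [Hl|Hl].
  - rewrite (iH_low H y Hl). auto.
  - apply (rr_rev H). apply iH_nonneg. lra. rewrite (iH_spec H y Hl). auto.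
Qed.

Lemma iH_lower {phi dphi d2phi h dh d2h : R -> R} (H : HP phi dphi d2phi h dh d2h) y a :
  0 <= a -> rr dh dphi a < y -> a < iH dh dphi y.
Proof.
  intros Ha Hy.
  assert (Hl : rr dh dphi 0 <= y).
  { destruct (Rle_lt_or_eq_dec _ _ Ha) as [Hlt|Heq].
    - assert (A := rr_incr H 0 a ltac:(lra) Hlt). lra.
    - subst. lra. }
  apply (rr_rev H). auto. apply iH_nonneg. rewrite (iH_spec H y Hl). auto.
Qed.

Lemma iH_mono {phi dphi d2phi h dh d2h : R -> R} (H : HP phi dphi d2phi h dh d2h) y1 y2 :
  y1 <= y2 -> iH dh dphi y1 <= iH dh dphi y2.
Proof.
  intros Hy. destruct (Rlt_le_dec y1 (rr dh dphi 0)) as [Hl|Hl].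
  - rewrite (iH_low H y1 Hl). apply iH_nonneg.
  - apply (rr_rev_le H). apply iH_nonneg. apply iH_nonneg.
    rewrite (iH_spec H y1 Hl). rewrite (iH_spec H y2 ltac:(lra)). auto.
Qed.

Lemma iH_zero {phi dphi d2phi h dh d2h : R -> R} (H : HP phi dphi d2phi h dh d2h) :
  iH dh dphi (rr dh dphi 0) = 0.
Proof.
  assert (A := iH_spec H (rr dh dphi 0) ltac:(lra)).
  assert (B := iH_nonneg dh dphi (rr dh dphi 0)).
  destruct (Rle_lt_or_eq_dec _ _ B) as [Hlt|Heq]; auto.
  assert (C := rr_incr H 0 _ ltac:(lra) Hlt). lra.
Qed.


Lemma eta_nonneg {phi dphi d2phi h dh d2h : R -> R} (H : HP phi dphi d2phi h dh d2h) y :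
  0 <= h (iH dh dphi y).
Proof. dHP H. apply Hh_nn. apply iH_nonneg. Qed.

Lemma eta_mono {phi dphi d2phi h dh d2h : R -> R} (H : HP phi dphi d2phi h dh d2h) y1 y2 :
  y1 <= y2 -> h (iH dh dphi y1) <= h (iH dh dphi y2).
Proof.
  dHP H. intros Hy. assert (A := iH_mono H y1 y2 Hy).
  destruct (Rle_lt_or_eq_dec _ _ A) as [Hlt|Heq].
  - left. apply Hh_incr; auto. apply iH_nonneg.
  - rewrite Heq. lra.
Qed.

Lemma eta_bound {phi dphi d2phi h dh d2h : R -> R} (H : HP phi dphi d2phi h dh d2h) :
  exists M, 0 <= M /\ forall y, 0 < y -> h (iH dh dphi y) <= M * y.
Proof.
  dHP H. destruct Hphi_bdd as [M HM]. exists M.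
  assert (HM0 : 0 <= M) by (rewrite <- Hphi0; apply HM; lra). split; auto.
  intros y Hy. destruct (Rlt_le_dec y (rr dh dphi 0)) as [Hl|Hl].
  - rewrite (iH_low H y Hl). rewrite Hh0. nra.
  - assert (Hs := iH_spec H y Hl). assert (Hn := iH_nonneg dh dphi y).
    set (x := iH dh dphi y) in *.
    destruct (Rle_lt_or_eq_dec _ _ Hn) as [Hx|Hx].
    + assert (T1 := tangent_strict h x (dh x) 0 Hh_conv Hx ltac:(apply Hh_C2; auto) ltac:(lra) ltac:(lra)).
      assert (T2 := tangent_strict_conc phi x (dphi x) 0 Hphi_conc Hx ltac:(apply Hphi_C2; auto) ltac:(lra) ltac:(lra)).
      assert (Hp := dphi_pos H x ltac:(lra)).
      assert (Hdx : dh x = y * dphi x).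
      { unfold rr in Hs. rewrite <- Hs. field. lra. }
      assert (HMx := HM x ltac:(lra)).
      assert (x * dphi x < M) by lra.
      assert (h x < x * dh x) by lra.
      rewrite Hdx in *. nra.
    + rewrite <- Hx. rewrite Hh0. nra.
Qed.

Lemma h_cont_within {phi dphi d2phi h dh d2h : R -> R} (H : HP phi dphi d2phi h dh d2h) x0 :
  0 <= x0 -> forall e, 0 < e -> exists d, 0 < d /\
    forall x, 0 <= x -> Rabs (x - x0) < d -> Rabs (h x - h x0) < e.
Proof.
  dHP H. intros Hx0 e He. destruct (Rle_lt_or_eq_dec _ _ Hx0) as [Hlt|Heq].
  - assert (Hc : continuous h x0) by (apply (deriv_cont h dh); apply Hh_C2; auto).
    destruct (cont_eps_delta h x0 Hc e He) as [d [Hd Hdd]]. exists d. split; auto.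
  - subst x0. destruct Hh_C2 as (_&_&_&Hl&_).
    assert (F := proj1 (filterlim_locally h (h 0)) Hl (mkposreal e He)).
    destruct F as [d Hd]. exists d. split. apply cond_pos.
    intros x Hx Hxd. destruct (Rle_lt_or_eq_dec _ _ Hx) as [Hxp|Hxe].
    + specialize (Hd x). assert (B : ball (h 0) e (h x)).
      { apply Hd; [apply ball_R; rewrite Rminus_0_r in *; auto | auto]. }
      apply ball_R in B. unfold minus, plus, opp in B; simpl in B. exact B.
    + subst x. rewrite Rminus_eq_0, Rabs_R0. auto.
Qed.

Lemma eta_cont {phi dphi d2phi h dh d2h : R -> R} (H : HP phi dphi d2phi h dh d2h) y0 :
  continuous (fun y => h (iH dh dphi y)) y0.
Proof.
  apply eps_delta_cont. intros e He.
  destruct (Rlt_le_dec y0 (rr dh dphi 0)) as [Hl|Hl].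
  - exists (rr dh dphi 0 - y0). split. lra. intros y Hy. apply Rabs_def2 in Hy.
    rewrite (iH_low H y0 Hl), (iH_low H y ltac:(lra)). rewrite Rminus_eq_0, Rabs_R0. auto.
  - assert (Hs := iH_spec H y0 Hl). assert (Hn := iH_nonneg dh dphi y0).
    set (x0 := iH dh dphi y0) in *.
    destruct (h_cont_within H x0 Hn e He) as [dh0 [Hdh0 Hc]].
    assert (Hub : forall b, 0 < b -> b <= dh0 / 2 -> exists db, 0 < db /\
       forall y, Rabs (y - y0) < db -> iH dh dphi y < x0 + b).
    { intros b Hb Hbd. assert (A := rr_incr H x0 (x0 + b) Hn ltac:(lra)).
      exists (rr dh dphi (x0 + b) - y0). split. lra. intros y Hy. apply Rabs_def2 in Hy.
      apply (iH_upper H). lra. lra. }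
    destruct (Rle_lt_or_eq_dec _ _ Hn) as [Hx0|Hx0].
    + set (b := Rmin (dh0 / 2) (x0 / 2)).
      assert (Hb1 : b <= dh0 / 2) by apply Rmin_l. assert (Hb2 : b <= x0 / 2) by apply Rmin_r.
      assert (Hb0 : 0 < b) by (apply Rmin_glb_lt; lra).
      destruct (Hub b Hb0 Hb1) as [db [Hdb Hdbb]].
      assert (A := rr_incr H (x0 - b) x0 ltac:(lra) ltac:(lra)).
      exists (Rmin db (y0 - rr dh dphi (x0 - b))). split. apply Rmin_glb_lt; lra.
      intros y Hy.
      assert (Hm1 := Rmin_l db (y0 - rr dh dphi (x0 - b))).
      assert (Hm2 := Rmin_r db (y0 - rr dh dphi (x0 - b))).
      assert (U1 := Hdbb y ltac:(lra)).
      apply Rabs_def2 in Hy.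
      assert (L1 : x0 - b < iH dh dphi y) by (apply (iH_lower H); lra).
      apply Hc. apply iH_nonneg. apply Rabs_def1; lra.
    + destruct (Hub (dh0 / 2) ltac:(lra) ltac:(lra)) as [db [Hdb Hdbb]].
      exists db. split; auto. intros y Hy.
      assert (U1 := Hdbb y Hy). assert (N1 := iH_nonneg dh dphi y).
      apply Hc. auto. apply Rabs_def1; lra.
Qed.


Definition fint (lam del : R) (U dU h dh dphi : R -> R) (lamLag : R) : R -> R :=
  fun s => exp (- lam * s) *
       (U (inv_dU dU (/ lamLag * exp ((lam - del) * s)))
        - h (inv_hphi dh dphi (/ lamLag * exp ((lam - del) * s)))).

Lemma exp_le_mono x y : x <= y -> exp x <= exp y.
Proof. intros H. destruct (Rle_lt_or_eq_dec _ _ H) as [Hl| ->]. left. apply exp_increasing; auto. lra. Qed.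

Lemma fint_cont {U dU d2U phi dphi d2phi h dh d2h : R -> R} (HU : UH U dU d2U)
  (H : HP phi dphi d2phi h dh d2h) lam del c : 0 < c -> forall s, continuous (fint lam del U dU h dh dphi c) s.
Proof.
  intros Hc s. unfold fint.
  assert (Hy : continuous (fun s => / c * exp ((lam - del) * s)) s).
  { apply (ex_derive_continuous (V:=R_NormedModule)). auto_derive. auto. }
  assert (Hyp : 0 < / c * exp ((lam - del) * s)).
  { apply Rmult_lt_0_compat. apply Rinv_0_lt_compat; auto. apply exp_pos. }
  apply (continuous_mult (fun s => exp (- lam * s))
    (fun s => U (inv_dU dU (/ c * exp ((lam - del) * s))) - h (inv_hphi dh dphi (/ c * exp ((lam - del) * s))))).
  - apply (ex_derive_continuous (V:=R_NormedModule)). auto_derive. auto.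
  - apply (continuous_minus (fun s => U (inv_dU dU (/ c * exp ((lam - del) * s))))
       (fun s => h (inv_hphi dh dphi (/ c * exp ((lam - del) * s))))).
    + apply (continuous_comp (fun s => / c * exp ((lam - del) * s)) (fun y => U (iU dU y))). auto.
      apply (uu_cont HU). auto.
    + apply (continuous_comp (fun s => / c * exp ((lam - del) * s)) (fun y => h (iH dh dphi y))). auto.
      apply (eta_cont H).
Qed.

Lemma fint_bound {U dU d2U phi dphi d2phi h dh d2h : R -> R} (HU : UH U dU d2U)
  (H : HP phi dphi d2phi h dh d2h) (HU_nn : nonneg_valued U) lam del c : 0 < del -> del <= lam -> 0 < c ->
  exists C, 0 < C /\ forall s, 0 <= s -> Rabs (fint lam del U dU h dh dphi c s) <= C * exp (- del * s).
Proof.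
  intros Hdel Hlam Hc.
  destruct (eta_bound H) as [M [HM0 HM]].
  assert (Hic : 0 < / c) by (apply Rinv_0_lt_compat; auto).
  set (A := U (iU dU (/ c))).
  assert (HA : 0 <= A).
  { unfold A. destruct (iU_spec HU (/ c) Hic) as [P _]. apply HU_nn. lra. }
  exists (A + M / c + 1). split. { assert (0 <= M / c) by (apply Rdiv_le_0_compat; lra). lra. }
  intros s Hs. unfold fint.
  set (y := / c * exp ((lam - del) * s)).
  change (inv_dU dU y) with (iU dU y). change (inv_hphi dh dphi y) with (iH dh dphi y).
  assert (He1 : 1 <= exp ((lam - del) * s)).
  { rewrite <- exp_0. apply exp_le_mono. nra. }
  assert (Hy : / c <= y) by (unfold y; nra).
  assert (Huy : 0 <= U (iU dU y) <= A).
  { destruct (iU_spec HU y ltac:(lra)) as [P _]. split. apply HU_nn. lra.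
    destruct (Rle_lt_or_eq_dec _ _ Hy) as [Hl| <-]. left. apply (uu_decr HU); auto. unfold A. lra. }
  assert (Hey : 0 <= h (iH dh dphi y) <= M * y).
  { split. apply (eta_nonneg H). apply HM. lra. }
  assert (Hexp : exp (- lam * s) * exp ((lam - del) * s) = exp (- del * s)).
  { rewrite <- exp_plus. f_equal. ring. }
  assert (Hl : exp (- lam * s) <= exp (- del * s)) by (apply exp_le_mono; nra).
  assert (Hp := exp_pos (- lam * s)).
  rewrite Rabs_mult, (Rabs_pos_eq (exp _)) by lra.
  assert (Rabs (U (iU dU y) - h (iH dh dphi y)) <= U (iU dU y) + h (iH dh dphi y)).
  { apply Rabs_le. lra. }
  apply Rle_trans with (exp (- lam * s) * (A + M * y)).
  { apply Rmult_le_compat_l; lra. }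
  assert (Hmy : exp (- lam * s) * (M * y) = M / c * exp (- del * s)).
  { unfold y. rewrite <- Hexp. field. lra. }
  assert (0 <= M / c) by (apply Rdiv_le_0_compat; lra).
  assert (0 < exp (- del * s)) by apply exp_pos.
  nra.
Qed.

Theorem lemma3p5
  (phi dphi d2phi U dU d2U h dh d2h : R -> R) (lam del : R)
  (* phi *)
  (Hphi_C2 : C2_on_nonneg phi dphi d2phi)
  (Hphi_conc : strictly_concave_nonneg phi)
  (Hphi_bdd : exists M, forall x, 0 <= x -> phi x <= M)
  (Hphi_incr : increasing_nonneg phi)
  (Hphi_nn : nonneg_valued phi)
  (Hphi0 : phi 0 = 0)
  (Hdphi0 : 0 < dphi 0)
  (* U *)
  (HU_C2 : C2_on_pos_cont0 U dU d2U)
  (HU_conc : strictly_concave_nonneg U)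
  (HU_incr : increasing_nonneg U)
  (HU_nn : nonneg_valued U)
  (HU0 : U 0 = 0)
  (HdU_inf : filterlim dU (Rbar_locally p_infty) (locally 0))
  (HdU_0 : filterlim dU (at_right 0) (Rbar_locally p_infty))
  (* h *)
  (Hh_C2 : C2_on_nonneg h dh d2h)
  (Hh_conv : strictly_convex_nonneg h)
  (Hh_incr : increasing_nonneg h)
  (Hh_nn : nonneg_valued h)
  (Hh0 : h 0 = 0)
  (Hdh0 : 0 < dh 0)
  (* constants *)
  (Hdel : 0 < del) (Hlam : del <= lam) :
  forall a b, 0 < a -> a < b ->
    G lam del U dU h dh dphi a < G lam del U dU h dh dphi b.
Proof.
  intros a b Ha Hab.
  assert (HU : UH U dU d2U) by (unfold UH; tauto).
  assert (H : HP phi dphi d2phi h dh d2h) by (unfold HP; tauto).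
  change (G lam del U dU h dh dphi a) with (RInt_gen (fint lam del U dU h dh dphi a) (at_point 0) (Rbar_locally p_infty)).
  change (G lam del U dU h dh dphi b) with (RInt_gen (fint lam del U dU h dh dphi b) (at_point 0) (Rbar_locally p_infty)).
  assert (Hb : 0 < b) by lra.
  destruct (fint_bound HU H HU_nn lam del a Hdel Hlam Ha) as [Ca [HCa HBa]].
  destruct (fint_bound HU H HU_nn lam del b Hdel Hlam Hb) as [Cb [HCb HBb]].
  destruct (improper _ Ca del (fint_cont HU H lam del a Ha) Hdel HCa HBa) as [La [HLa HGa]].
  destruct (improper _ Cb del (fint_cont HU H lam del b Hb) Hdel HCb HBb) as [Lb [HLb HGb]].
  rewrite HGa, HGb.
  set (fa := fint lam del U dU h dh dphi a) in *.
  set (fb := fint lam del U dU h dh dphi b) in *.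
  assert (Hca := fint_cont HU H lam del a Ha). assert (Hcb := fint_cont HU H lam del b Hb).
  fold fa in Hca. fold fb in Hcb.
  set (g := fun s => fb s - fa s).
  assert (Hgc : forall s, continuous g s).
  { intros s. apply (continuous_minus fb fa); auto. }
  assert (Hgp : forall s, 0 < g s).
  { intros s. unfold g, fb, fa, fint.
    set (t := exp ((lam - del) * s)). assert (Ht : 0 < t) by apply exp_pos.
    assert (Hab' : / b < / a) by (apply Rinv_lt_contravar; nra).
    assert (Hib : 0 < / b) by (apply Rinv_0_lt_compat; lra).
    change (inv_dU dU (/ a * t)) with (iU dU (/ a * t)).
    change (inv_dU dU (/ b * t)) with (iU dU (/ b * t)).
    change (inv_hphi dh dphi (/ a * t)) with (iH dh dphi (/ a * t)).
    change (inv_hphi dh dphi (/ b * t)) with (iH dh dphi (/ b * t)).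
    assert (A1 := uu_decr HU (/ b * t) (/ a * t) ltac:(nra) ltac:(nra)).
    assert (A2 := eta_mono H (/ b * t) (/ a * t) ltac:(nra)).
    assert (Hp := exp_pos (- lam * s)). nra. }
  assert (Hm : 0 < RInt g 0 1).
  { apply RInt_gt_0. lra. intros; auto. intros; auto. }
  assert (Hlim : is_lim (fun x => RInt fb 0 x - RInt fa 0 x) p_infty (Lb - La)).
  { apply (is_lim_minus _ _ p_infty Lb La). exact HLb. exact HLa. reflexivity. }
  assert (Hle := is_lim_le_loc (fun _ => RInt g 0 1) (fun x => RInt fb 0 x - RInt fa 0 x) p_infty
           (RInt g 0 1) (Lb - La)).
  simpl in Hle.
  cut (RInt g 0 1 <= Lb - La). lra.
  apply Hle.
  - exists 1. intros x Hx.
    assert (E : RInt fb 0 x - RInt fa 0 x = RInt g 0 x).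
    { unfold g. rewrite (RInt_minus (V:=R_CompleteNormedModule) fb fa). reflexivity.
      apply exRI; auto. apply exRI; auto. }
    rewrite E. rewrite <- (RInt_Chasles g 0 1 x) by (apply exRI; auto).
    assert (0 <= RInt g 1 x).
    { apply RInt_ge_0. lra. apply exRI; auto. intros z _. left; auto. }
    unfold plus; simpl. lra.
  - apply is_lim_const.
  - exact Hlim.
Qed.
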